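(* Every $K$-algebra endomorphism of $\mathbb{S}_1$ is either injective or its image is a commutative finite-dimensional algebra. Moreover, for every positive integer $d$ there is an endomorphism of $\mathbb{S}_1$ whose image has dimension exactly $d$.
   Context: $K$ is a field of characteristic zero and $\mathbb{S}_1=K\langle x,y\mid yx=1\rangle$ is the $K$-algebra generated by $x,y$ with the single defining relation $yx=1$. *)

(* Defs.v *)
From HB Require Import structures.
From mathcomp Require Import all_boot all_order all_algebra.
Set Implicit Arguments. Unset Strict Implicit. Unset Printing Implicit Defensive.
Import GRing.Theory.
Local Open Scope ring_scope.

Definition alg_morph (K : fieldType) (A B : algType K) (f : A -> B) : Prop :=
  [/\ forall a b, f (a + b) = f a + f b,
      forall (k : K) a, f (k *: a) = k *: f a,
      f 1 = 1
    & forall a b, f (a * b) = f a * f b].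

(* (A, x, y) is the K-algebra presented by generators x, y and the single
   relation y x = 1, i.e. A = K<x,y | yx = 1> = S_1, characterised by its
   universal property (which is the definition of a presented algebra). *)
Definition S1_presentation (K : fieldType) (A : algType K) (x y : A) : Prop :=
  y * x = 1 /\
  forall (B : algType K) (a b : B), b * a = 1 ->
    (exists f : A -> B, alg_morph f /\ f x = a /\ f y = b) /\
    (forall f g : A -> B, alg_morph f -> alg_morph g ->
       f x = g x -> f y = g y -> forall z, f z = g z).

Definition image_of (A B : Type) (f : A -> B) (v : B) : Prop := exists a, f a = v.

Definition is_basis (K : fieldType) (A : lmodType K) (P : A -> Prop)
    (d : nat) (v : 'I_d -> A) : Prop :=
  [/\ forall i, P (v i),
      forall w, P w -> exists c : 'I_d -> K, w = \sum_(i < d) c i *: v i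
    & forall c : 'I_d -> K, \sum_(i < d) c i *: v i = 0 -> forall i, c i = 0].

Definition has_dim (K : fieldType) (A : lmodType K) (P : A -> Prop) (d : nat) : Prop :=
  exists v : 'I_d -> A, is_basis P v.

(* Main.v *)
Require Import Defs.
From HB Require Import structures.
From mathcomp Require Import all_boot all_order all_algebra.
From Stdlib Require Import ClassicalEpsilon FunctionalExtensionality ProofIrrelevance Classical Lia.
Import GRing.Theory.
Local Open Scope ring_scope.

Set Implicit Arguments. Unset Strict Implicit. Unset Printing Implicit Defensive.

Module P1.

Section Classic.
Variable T : Type.
Definition ceq (a b : T) : bool := if excluded_middle_informative (a = b) then true else false.
Lemma ceqP : Equality.axiom ceq.
Proof. by move=> a b; rewrite /ceq; case: excluded_middle_informative => H; constructor. Qed.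
Definition cfind (P : pred T) (n : nat) : option T :=
  match excluded_middle_informative (exists x, P x) with
  | left H => Some (proj1_sig (constructive_indefinite_description _ H))
  | right _ => None end.
Lemma cfind_correct P n x : cfind P n = Some x -> P x.
Proof.
rewrite /cfind; case: excluded_middle_informative => // H [<-].
exact: proj2_sig (constructive_indefinite_description _ H).
Qed.
Lemma cfind_complete (P : pred T) : (exists x, P x) -> exists n, cfind P n.
Proof. by move=> H; exists 0%N; rewrite /cfind; case: excluded_middle_informative. Qed.
Lemma cfind_ext (P Q : pred T) : P =1 Q -> cfind P =1 cfind Q.
Proof. by move=> H; have E : P = Q := functional_extensionality _ _ H; subst. Qed.
End Classic.

Section Model.
Variable K : fieldType.
Definition seqK := nat -> K.
Definition islin (f : seqK -> seqK) :=
  (forall u v, f (fun n => u n + v n) = fun n => f u n + f v n) /\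
  (forall k u, f (fun n => k * u n) = fun n => k * f u n).
Record op := Op { opf :> seqK -> seqK; opl : islin opf }.

Lemma op_ext (f g : op) : (forall u n, f u n = g u n) -> f = g.
Proof.
case: f g => f fl [g gl] /= H.
have E : f = g by apply: functional_extensionality => u; apply: functional_extensionality => n; apply: H.
subst; f_equal; apply: proof_irrelevance.
Qed.

HB.instance Definition _ := hasDecEq.Build op (@ceqP op).
HB.instance Definition _ := hasChoice.Build op (@cfind_correct op) (@cfind_complete op) (@cfind_ext op).

Lemma lin_add (f : op) u v : f (fun n => u n + v n) = fun n => f u n + f v n.
Proof. exact: (proj1 (opl f)). Qed.
Lemma lin_scale (f : op) k u : f (fun n => k * u n) = fun n => k * f u n.
Proof. exact: (proj2 (opl f)). Qed.

Ltac fext := apply: functional_extensionality => ?.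

Definition op0 : op.
Proof. refine (@Op (fun _ _ => 0) _); split=> *; fext. by rewrite addr0. by rewrite mulr0. Defined.
Definition opadd (f g : op) : op.
Proof. refine (@Op (fun u n => f u n + g u n) _); split=> *; rewrite ?lin_add ?lin_scale; fext.
  by rewrite addrACA. by rewrite mulrDr. Defined.
Definition opopp (f : op) : op.
Proof. refine (@Op (fun u n => - f u n) _); split=> *; rewrite ?lin_add ?lin_scale; fext.
  by rewrite opprD. by rewrite mulrN. Defined.
Definition opmul (f g : op) : op.
Proof. refine (@Op (fun u => f (g u)) _); split=> *;
  by rewrite ?lin_add ?lin_scale. Defined.
Definition op1 : op.
Proof. by refine (@Op (fun u => u) _); split. Defined.
Definition opscale (k : K) (f : op) : op.
Proof. refine (@Op (fun u n => k * f u n) _); split=> *; rewrite ?lin_add ?lin_scale; fext.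
  by rewrite mulrDr. by rewrite mulrCA. Defined.

Lemma opaddA : associative opadd. Proof. by move=> *; apply: op_ext=> * /=; rewrite addrA. Qed.
Lemma opaddC : commutative opadd. Proof. by move=> *; apply: op_ext=> * /=; rewrite addrC. Qed.
Lemma opadd0 : left_id op0 opadd. Proof. by move=> *; apply: op_ext=> * /=; rewrite add0r. Qed.
Lemma opaddN : left_inverse op0 opopp opadd. Proof. by move=> *; apply: op_ext=> * /=; rewrite addNr. Qed.
HB.instance Definition _ := GRing.isZmodule.Build op opaddA opaddC opadd0 opaddN.

Lemma opmulA : associative opmul. Proof. by move=> *; apply: op_ext. Qed.
Lemma opmul1 : left_id op1 opmul. Proof. by move=> *; apply: op_ext. Qed.
Lemma opmul1r : right_id op1 opmul. Proof. by move=> *; apply: op_ext. Qed.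
Lemma opmulDl : left_distributive opmul (@GRing.add op). Proof. by move=> *; apply: op_ext. Qed.
Lemma opmulDr : right_distributive opmul (@GRing.add op).
Proof. by move=> f g h; apply: op_ext=> u n /=; rewrite lin_add. Qed.
Lemma op1_neq0 : op1 != 0.
Proof. by apply/eqP=> /(congr1 (fun f : op => f (fun _ => 1) 0%N)) /= /eqP; rewrite oner_eq0. Qed.
HB.instance Definition _ := GRing.Zmodule_isNzRing.Build op opmulA opmul1 opmul1r opmulDl opmulDr op1_neq0.

Lemma opscaleA a b (v : op) : opscale a (opscale b v) = opscale (a * b) v.
Proof. by apply: op_ext=> * /=; rewrite mulrA. Qed.
Lemma opscale1 : left_id 1 opscale. Proof. by move=> *; apply: op_ext=> * /=; rewrite mul1r. Qed.
Lemma opscaleDr : right_distributive opscale +%R. Proof. by move=> *; apply: op_ext=> * /=; rewrite mulrDr. Qed.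
Lemma opscaleDl v : {morph opscale^~ v: a b / a + b}. Proof. by move=> *; apply: op_ext=> * /=; rewrite mulrDl. Qed.
HB.instance Definition _ := GRing.Zmodule_isLmodule.Build K op opscaleA opscale1 opscaleDr opscaleDl.
Lemma opscaleAl (a : K) (u v : op) : a *: (u * v) = (a *: u) * v. Proof. by apply: op_ext. Qed.
HB.instance Definition _ := GRing.Lmodule_isLalgebra.Build K op opscaleAl.
Lemma opscaleAr (a : K) (u v : op) : a *: (u * v) = u * (a *: v).
Proof. by apply: op_ext=> w n /=; rewrite lin_scale. Qed.
HB.instance Definition _ := GRing.Lalgebra_isAlgebra.Build K op opscaleAr.

Definition opX : op.
Proof. refine (@Op (fun u n => match n with 0 => 0 | m.+1 => u m end) _); split=> *; apply: functional_extensionality => -[|m] //. by rewrite addr0. by rewrite mulr0. Defined.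
Definition opY : op.
Proof. by refine (@Op (fun u n => u n.+1) _); split. Defined.
Lemma opYX : opY * opX = 1. Proof. by apply: op_ext. Qed.
Lemma opXY : opX * opY != 1.
Proof. by apply/eqP=> /(congr1 (fun f : op => f (fun _ => 1) 0%N)) /= /eqP; rewrite eq_sym oner_eq0. Qed.
End Model.

End P1.
Import P1.

Module P2.

Ltac nlia := unfold subn, addn in *; lia.

Section Pow.
Variables (K : fieldType) (A : algType K) (x y : A).
Hypothesis yx : y * x = 1.

Lemma yXnX j k : y ^+ j * x ^+ (j + k) = x ^+ k.
Proof.
elim: j => [|j IH]; first by rewrite expr0 mul1r.
by rewrite addSn exprSr exprS -mulrA (mulrA y) yx mul1r IH.
Qed.
Lemma yXnY j k : y ^+ (j + k) * x ^+ j = y ^+ k.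
Proof.
elim: j => [|j IH]; first by rewrite expr0 mulr1 add0n.
by rewrite addSn (exprSr y) (exprS x) -mulrA (mulrA y) yx mul1r IH.
Qed.
Lemma yXn j k : y ^+ j * x ^+ k = if (j <= k)%N then x ^+ (k - j) else y ^+ (j - k).
Proof.
case: leqP => h; first by rewrite -{1}(subnKC h) yXnX.
by rewrite -{1}(subnKC (ltnW h)) yXnY.
Qed.
Lemma yXnn j : y ^+ j * x ^+ j = 1.
Proof. by rewrite -{2}(addn0 j) yXnX expr0. Qed.
End Pow.

Section S1.
Variables (K : fieldType) (A : algType K) (x y : A).
Hypothesis yx : y * x = 1.

Definition mon i j := x ^+ i * y ^+ j.
Fact pp_key : unit. Proof. exact: tt. Qed.
Definition pp : A := locked_with pp_key (1 - x * y).
Lemma ppE : pp = 1 - x * y. Proof. by rewrite /pp unlock. Qed.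
Definition E r l := x ^+ r * pp * y ^+ l.
Definition eM n := 1 - x ^+ n * y ^+ n.

Lemma ypp : y * pp = 0.
Proof. by rewrite ppE mulrBr mulr1 mulrA yx mul1r subrr. Qed.
Lemma ppx : pp * x = 0.
Proof. by rewrite ppE mulrBl mul1r -mulrA yx mulr1 subrr. Qed.
Lemma pppp : pp * pp = pp.
Proof. by rewrite {1}ppE mulrBl mul1r -mulrA ypp mulr0 subr0. Qed.
Lemma yXpp n : y ^+ n.+1 * pp = 0.
Proof. by rewrite exprSr -mulrA ypp mulr0. Qed.
Lemma ppxX n : pp * x ^+ n.+1 = 0.
Proof. by rewrite exprS mulrA ppx mul0r. Qed.

Lemma ppyx m k : pp * (y ^+ m * x ^+ k) * pp = if m == k then pp else 0.
Proof.
rewrite yXn //; case: (ltngtP m k) => h.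
- by rewrite -(subnSK h) ppxX !mul0r.
- by rewrite -(subnSK h) -mulrA yXpp mulr0.
- by rewrite h subnn expr0 mulr1 pppp.
Qed.

Lemma monxpp i j n : mon i j * x ^+ n * pp = if (j <= n)%N then x ^+ (i + (n - j)) * pp else 0.
Proof.
rewrite /mon -(mulrA (x ^+ i)) (yXn yx); case: leqP => h; first by rewrite -exprD.
by rewrite -(subnSK h) -!mulrA yXpp !mulr0.
Qed.

Lemma key m i j n : pp * y ^+ m * mon i j * x ^+ n * pp =
  if (j <= n)%N && (m == i + (n - j))%N then pp else 0.
Proof.
have -> : pp * y ^+ m * mon i j * x ^+ n * pp = (pp * y ^+ m) * (mon i j * x ^+ n * pp) by rewrite !mulrA.
rewrite monxpp; case: leqP => h /=; last by rewrite !mulr0.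
by rewrite !mulrA -(mulrA pp) ppyx.
Qed.

Definition ev (s : seq (K * nat * nat)) : A := \sum_(t <- s) t.1.1 *: mon t.1.2 t.2.
Definition term (t : K * nat * nat) (m n : nat) : K :=
  if (t.2 <= n)%N && (m == t.1.2 + (n - t.2))%N then t.1.1 else 0.
Definition cco s m n : K := \sum_(t <- s) term t m n.
Definition term' t m n : K := match m, n with m'.+1, n'.+1 => term t m' n' | _, _ => 0 end.
Definition cco' s m n : K := \sum_(t <- s) term' t m n.
Definition bnd N (s : seq (K * nat * nat)) := all (fun t => (t.1.2 < N) && (t.2 < N))%N s.

Lemma ev_nil : ev [::] = 0. Proof. by rewrite /ev big_nil. Qed.
Lemma ev_cons t s : ev (t :: s) = t.1.1 *: mon t.1.2 t.2 + ev s. Proof. by rewrite /ev big_cons. Qed.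
Lemma ev_cat s1 s2 : ev (s1 ++ s2) = ev s1 + ev s2. Proof. by rewrite /ev big_cat. Qed.

Lemma corner s m n : pp * y ^+ m * ev s * x ^+ n * pp = cco s m n *: pp.
Proof.
elim: s => [|t s IH]; first by rewrite ev_nil /cco big_nil mulr0 !mul0r scale0r.
rewrite ev_cons /cco big_cons mulrDr !mulrDl IH -/(cco s m n) scalerDl; congr (_ + _).
rewrite -scalerAr -!scalerAl key /term; case: ifP => _; first by [].
by rewrite scaler0 scale0r.
Qed.

Lemma condP (j0 n m i0 : nat) : reflect ((j0 <= n)%coq_nat /\ m = (i0 + (n - j0))%N)
  ((j0 <= n)%N && (m == i0 + (n - j0))%N).
Proof. by apply: (iffP andP) => [[/leP ? /eqP ?]|[/leP ? /eqP ?]]. Qed.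
Lemma eqandP (m i0 n j0 : nat) : reflect (m = i0 /\ n = j0) ((m == i0) && (n == j0)).
Proof. by apply: (iffP andP) => [[/eqP ? /eqP ?]|[-> ->]]. Qed.

Lemma term_diff t m n : term t m n - term' t m n =
  if (m == t.1.2) && (n == t.2) then t.1.1 else 0.
Proof.
case: t => [[c i0] j0] /=; rewrite /term /=.
case: m => [|m]; case: n => [|n]; rewrite /= ?/term /=;
  repeat match goal with
 | |- context [ ((?j0 <= ?n)%N && (?m == (?i0 + (?n - ?j0))%N)) ] =>
     let H := fresh "H" in destruct (condP j0 n m i0) as [H|H]
 | |- context [ ((?m == ?i0) && (?n == ?j0)) ] =>
     let H := fresh "H" in destruct (eqandP m i0 n j0) as [H|H]
  end; rewrite ?subrr ?subr0 //; exfalso; nlia.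
Qed.

Lemma delta_sum N i0 j0 (c : K) : (i0 < N)%N -> (j0 < N)%N ->
  \sum_(i < N) \sum_(j < N) (if (i == i0 :> nat) && (j == j0 :> nat) then c else 0) *: mon i j
  = c *: mon i0 j0.
Proof.
move=> h0 h1; rewrite (bigD1 (Ordinal h0)) //= [X in _ + X]big1 ?addr0; last first.
  move=> i /negbTE; rewrite -val_eqE /= => ->; apply: big1 => j _; by rewrite scale0r.
rewrite (bigD1 (Ordinal h1)) //= !eqxx [X in _ + X]big1 ?addr0 //.
move=> j /negbTE; rewrite -val_eqE /= => ->; by rewrite ?andbF scale0r.
Qed.

Lemma decomp N s : bnd N s ->
  ev s = \sum_(i < N) \sum_(j < N) (cco s i j - cco' s i j) *: mon i j.
Proof.
elim: s => [|t s IH]; first by rewrite ev_nil; symmetry; apply: big1 => i _;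
  apply: big1 => j _; rewrite /cco /cco' !big_nil subrr scale0r.
rewrite /bnd /= => /andP [/andP [h0 h1] hs]; rewrite ev_cons IH //.
rewrite /cco /cco' -(delta_sum t.1.1 h0 h1) -big_split /=; apply: eq_bigr => i _.
rewrite -big_split /=; apply: eq_bigr => j _.
by rewrite !big_cons -scalerDl opprD addrACA term_diff.
Qed.

Lemma mon_mul i j k l : mon i j * mon k l =
  if (j <= k)%N then mon (i + (k - j)) l else mon i (j - k + l).
Proof.
have -> : mon i j * mon k l = x ^+ i * (y ^+ j * x ^+ k) * y ^+ l by rewrite /mon !mulrA.
rewrite (yXn yx); case: leqP => _.
  by rewrite -exprD.
by rewrite -mulrA -exprD.
Qed.

Definition spanned (z : A) := exists s, z = ev s.
Lemma spanned0 : spanned 0. Proof. by exists [::]; rewrite ev_nil. Qed.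
Lemma spanned_mon c i j : spanned (c *: mon i j).
Proof. by exists [:: (c, i, j)]; rewrite ev_cons ev_nil addr0. Qed.
Lemma spannedD u v : spanned u -> spanned v -> spanned (u + v).
Proof. by move=> [s1 ->] [s2 ->]; exists (s1 ++ s2); rewrite ev_cat. Qed.
Lemma spannedZ c u : spanned u -> spanned (c *: u).
Proof.
move=> [s ->]; exists [seq (c * t.1.1, t.1.2, t.2) | t <- s].
by rewrite /ev big_map scaler_sumr; apply: eq_bigr => t _; rewrite scalerA.
Qed.
Lemma spanned_sum (I : Type) (r : seq I) (F : I -> A) :
  (forall i, spanned (F i)) -> spanned (\sum_(i <- r) F i).
Proof. by move=> H; apply: big_ind => //; [apply: spanned0|apply: spannedD]. Qed.
Lemma spannedM u v : spanned u -> spanned v -> spanned (u * v).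
Proof.
move=> [s1 ->] [s2 ->]; rewrite /ev mulr_suml; apply: spanned_sum => t.
rewrite mulr_sumr; apply: spanned_sum => w.
rewrite -scalerAl -scalerAr scalerA mon_mul; case: ifP => _; exact: spanned_mon.
Qed.
Lemma spanned1 : spanned 1.
Proof. by have := spanned_mon 1 0 0; rewrite /mon !expr0 mulr1 scale1r. Qed.
Lemma spannedx : spanned x.
Proof. by have := spanned_mon 1 1 0; rewrite /mon expr1 expr0 mulr1 scale1r. Qed.
Lemma spannedy : spanned y.
Proof. by have := spanned_mon 1 0 1; rewrite /mon expr1 expr0 mul1r scale1r. Qed.
Lemma spannedN u : spanned u -> spanned (- u).
Proof. by move=> h; rewrite -scaleN1r; apply: spannedZ. Qed.
End S1.

End P2.
Import P2.

Module P3.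

Section Sub.
Variables (K : fieldType) (A : algType K) (S : A -> Prop).
Record clos := Clos { S0 : S 0; S1 : S 1; SD : forall u v, S u -> S v -> S (u + v);
  SN : forall u, S u -> S (- u); SM : forall u v, S u -> S v -> S (u * v);
  SZ : forall c u, S u -> S (c *: u) }.
Variable cl : clos.
Definition U : Type := (fun _ : clos => {z : A | S z}) cl.
Lemma U_ext (u v : U) : sval u = sval v -> u = v.
Proof. case: u v => u hu [v hv] /= E; subst; f_equal; apply: proof_irrelevance. Qed.
HB.instance Definition _ := hasDecEq.Build U (@ceqP U).
HB.instance Definition _ := hasChoice.Build U (@cfind_correct U) (@cfind_complete U) (@cfind_ext U).
Definition U0 : U := exist _ 0 (S0 cl).
Definition U1 : U := exist _ 1 (S1 cl).
Definition Uadd (u v : U) : U := exist _ (sval u + sval v) (SD cl (proj2_sig u) (proj2_sig v)).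
Definition Uopp (u : U) : U := exist _ (- sval u) (SN cl (proj2_sig u)).
Definition Umul (u v : U) : U := exist _ (sval u * sval v) (SM cl (proj2_sig u) (proj2_sig v)).
Definition Uscale c (u : U) : U := exist _ (c *: sval u) (SZ cl c (proj2_sig u)).
Lemma UaddA : associative Uadd. Proof. by move=> *; apply: U_ext; rewrite /= addrA. Qed.
Lemma UaddC : commutative Uadd. Proof. by move=> *; apply: U_ext; rewrite /= addrC. Qed.
Lemma Uadd0 : left_id U0 Uadd. Proof. by move=> *; apply: U_ext; rewrite /= add0r. Qed.
Lemma UaddN : left_inverse U0 Uopp Uadd. Proof. by move=> *; apply: U_ext; rewrite /= addNr. Qed.
HB.instance Definition _ := GRing.isZmodule.Build U UaddA UaddC Uadd0 UaddN.
Lemma UmulA : associative Umul. Proof. by move=> *; apply: U_ext; rewrite /= mulrA. Qed.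
Lemma Umul1 : left_id U1 Umul. Proof. by move=> *; apply: U_ext; rewrite /= mul1r. Qed.
Lemma Umul1r : right_id U1 Umul. Proof. by move=> *; apply: U_ext; rewrite /= mulr1. Qed.
Lemma UmulDl : left_distributive Umul (@GRing.add U).
Proof. by move=> *; apply: U_ext; rewrite /= mulrDl. Qed.
Lemma UmulDr : right_distributive Umul (@GRing.add U).
Proof. by move=> *; apply: U_ext; rewrite /= mulrDr. Qed.
Lemma U1_neq0 : U1 != 0.
Proof. by apply/eqP=> /(congr1 sval) /= /eqP; rewrite oner_eq0. Qed.
HB.instance Definition _ := GRing.Zmodule_isNzRing.Build U UmulA Umul1 Umul1r UmulDl UmulDr U1_neq0.
Lemma UscaleA a b (v : U) : Uscale a (Uscale b v) = Uscale (a * b) v.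
Proof. by apply: U_ext; rewrite /= scalerA. Qed.
Lemma Uscale1 : left_id 1 Uscale. Proof. by move=> *; apply: U_ext; rewrite /= scale1r. Qed.
Lemma UscaleDr : right_distributive Uscale +%R. Proof. by move=> *; apply: U_ext; rewrite /= scalerDr. Qed.
Lemma UscaleDl v : {morph Uscale^~ v: a b / a + b}. Proof. by move=> *; apply: U_ext; rewrite /= scalerDl. Qed.
HB.instance Definition _ := GRing.Zmodule_isLmodule.Build K U UscaleA Uscale1 UscaleDr UscaleDl.
Lemma UscaleAl (a : K) (u v : U) : a *: (u * v) = (a *: u) * v.
Proof. by apply: U_ext; rewrite /= scalerAl. Qed.
HB.instance Definition _ := GRing.Lmodule_isLalgebra.Build K U UscaleAl.
Lemma UscaleAr (a : K) (u v : U) : a *: (u * v) = u * (a *: v).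
Proof. by apply: U_ext; rewrite /= scalerAr. Qed.
HB.instance Definition _ := GRing.Lalgebra_isAlgebra.Build K U UscaleAr.

Lemma sval_morph : alg_morph (fun u : U => sval u).
Proof. by split. Qed.
End Sub.

Lemma alg_morph_comp (K : fieldType) (A B C : algType K) (f : A -> B) (g : B -> C) :
  alg_morph f -> alg_morph g -> alg_morph (fun z => g (f z)).
Proof.
move=> [f1 f2 f3 f4] [g1 g2 g3 g4]; split=> *; by rewrite ?f1 ?f2 ?f3 ?f4 ?g1 ?g2 ?g3 ?g4.
Qed.
Lemma alg_morph_id (K : fieldType) (A : algType K) : alg_morph (fun z : A => z).
Proof. by split. Qed.

Lemma all_spanned (K : fieldType) (A : algType K) (x y : A) :
  S1_presentation x y -> forall z, spanned x y z.
Proof.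
move=> [yx UP].
pose B := U (Clos (spanned0 x y) (spanned1 x y) (@spannedD _ _ x y) (@spannedN _ _ x y)
  (@spannedM _ _ x y yx) (@spannedZ _ _ x y)).
pose xB : B := exist _ x (spannedx x y).
pose yB : B := exist _ y (spannedy x y).
have hB : yB * xB = 1 by apply: U_ext; rewrite /= yx.
have [[f [fm [fx fy]]] _] := UP B xB yB hB.
have [_ uniq] := UP A x y yx.
have fm' := alg_morph_comp fm (sval_morph _).
move=> z; have := uniq _ _ fm' (alg_morph_id A) _ _ z.
by rewrite fx fy => /(_ erefl erefl) <-; exact: (proj2_sig (f z)).
Qed.

End P3.
Import P3.

Module P4.

Section AM.
Variables (K : fieldType) (A B : algType K) (f : A -> B).
Hypothesis fm : alg_morph f.
Lemma amD a b : f (a + b) = f a + f b. Proof. by case: fm. Qed.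
Lemma amZ c a : f (c *: a) = c *: f a. Proof. by case: fm. Qed.
Lemma am1 : f 1 = 1. Proof. by case: fm. Qed.
Lemma amM a b : f (a * b) = f a * f b. Proof. by case: fm. Qed.
Lemma am0 : f 0 = 0. Proof. by rewrite -(scale0r 0) amZ scale0r. Qed.
Lemma amN a : f (- a) = - f a. Proof. by rewrite -scaleN1r amZ scaleN1r. Qed.
Lemma amB a b : f (a - b) = f a - f b. Proof. by rewrite amD amN. Qed.
Lemma amX a n : f (a ^+ n) = f a ^+ n.
Proof. by elim: n => [|n IH]; rewrite ?expr0 ?am1 // !exprS amM IH. Qed.
Lemma am_sum (I : Type) (r : seq I) (F : I -> A) : f (\sum_(i <- r) F i) = \sum_(i <- r) f (F i).
Proof. by elim: r => [|i r IH]; rewrite ?big_nil ?am0 // !big_cons amD IH. Qed.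
End AM.

Lemma pp_neq0 (K : fieldType) (A : algType K) (x y : A) : S1_presentation x y -> pp x y != 0.
Proof.
move=> [yx UP]; have [[g [gm [gx gy]]] _] := UP _ _ _ (opYX K).
apply/eqP => h; have := congr1 g h; rewrite am0 // ppE amB // am1 // amM // gx gy.
by move/eqP; rewrite subr_eq0 eq_sym (negPf (opXY K)).
Qed.

Section Corner.
Variables (K : fieldType) (A : algType K) (x y : A).
Hypothesis yx : y * x = 1.
Hypothesis pn0 : pp x y != 0.
Local Notation pp := (pp x y).
Local Notation E := (E x y).
Local Notation mon := (mon x y).
Local Notation ev := (ev x y).

Fact eM_key : unit. Proof. exact: tt. Qed.
Definition eM n : A := locked_with eM_key (1 - x ^+ n * y ^+ n).
Lemma eME n : eM n = 1 - x ^+ n * y ^+ n. Proof. by rewrite /eM unlock. Qed.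

Lemma eM_sum n : eM n = \sum_(r < n) E r r.
Proof.
elim: n => [|n IH]; first by rewrite eME big_ord0 !expr0 mulr1 subrr.
rewrite big_ord_recr /= -IH !eME /E ppE mulrBr mulr1 mulrBl.
have -> : x ^+ n * (x * y) * y ^+ n = x ^+ n.+1 * y ^+ n.+1.
  by rewrite (exprSr x) (exprS y) !mulrA.
by rewrite addrA addrNK.
Qed.

Lemma E_mul r l r' l' : E r l * E r' l' = if l == r' then E r l' else 0.
Proof.
have -> : E r l * E r' l' = x ^+ r * (pp * (y ^+ l * x ^+ r') * pp) * y ^+ l' by rewrite /E !mulrA.
by rewrite ppyx //; case: eqP => _; rewrite ?mulr0 ?mul0r // /E mulrA.
Qed.

Lemma E_neq0 r l : E r l != 0.
Proof.
apply: contra pn0 => /eqP h; apply/eqP.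
have : y ^+ r * E r l * x ^+ l = pp.
  by rewrite /E !mulrA (yXnn yx) mul1r -mulrA (yXnn yx) mulr1.
by rewrite h mulr0 mul0r => <-.
Qed.

Lemma E_corner s r l : E r r * ev s * E l l = cco s r l *: E r l.
Proof.
have -> : E r r * ev s * E l l = x ^+ r * (pp * y ^+ r * ev s * x ^+ l * pp) * y ^+ l
  by rewrite /E !mulrA.
by rewrite corner // -scalerAr -scalerAl.
Qed.

Definition phi M (C : 'M[K]_M) : A := \sum_(r < M) \sum_(l < M) C r l *: E r l.

Lemma cornerE M s : eM M * ev s * eM M = phi (\matrix_(r < M, l < M) cco s r l).
Proof.
rewrite eM_sum !mulr_suml /phi; apply: eq_bigr => r _.
rewrite mulr_sumr; apply: eq_bigr => l _; by rewrite E_corner mxE.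
Qed.

Lemma phiD M (C D : 'M[K]_M) : phi (C + D) = phi C + phi D.
Proof.
rewrite /phi -big_split; apply: eq_bigr => r _; rewrite -big_split; apply: eq_bigr => l _.
by rewrite mxE scalerDl.
Qed.
Lemma phiN M (C : 'M[K]_M) : phi (- C) = - phi C.
Proof.
rewrite /phi -sumrN; apply: eq_bigr => r _; rewrite -sumrN; apply: eq_bigr => l _.
by rewrite mxE scaleNr.
Qed.
Lemma phiZ M c (C : 'M[K]_M) : phi (c *: C) = c *: phi C.
Proof.
rewrite /phi scaler_sumr; apply: eq_bigr => r _; rewrite scaler_sumr; apply: eq_bigr => l _.
by rewrite mxE scalerA.
Qed.
Lemma phi0 M : phi (0 : 'M[K]_M) = 0.
Proof. by rewrite /phi big1 // => r _; rewrite big1 // => l _; rewrite mxE scale0r. Qed.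

Lemma ord_neq n (i j : 'I_n) : i != j -> (i == j :> nat) = false.
Proof. by move/negbTE. Qed.

Lemma phiE M (C : 'M[K]_M) (r l : 'I_M) : E r r * phi C * E l l = C r l *: E r l.
Proof.
rewrite /phi mulr_sumr mulr_suml (bigD1 r) //= [X in _ + X]big1 ?addr0; last first.
  move=> r' /ord_neq hr; rewrite mulr_sumr mulr_suml big1 // => l' _.
  by rewrite -scalerAr -scalerAl E_mul eq_sym hr mul0r scaler0.
rewrite mulr_sumr mulr_suml (bigD1 l) //= [X in _ + X]big1 ?addr0; last first.
  by move=> l' /ord_neq hl; rewrite -scalerAr -scalerAl E_mul eqxx E_mul hl scaler0.
by rewrite -scalerAr -scalerAl !E_mul !eqxx E_mul eqxx.
Qed.

Lemma phi_inj M (C D : 'M[K]_M) : phi C = phi D -> C = D.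
Proof.
move=> h; apply/matrixP => r l; have := phiE (C - D) r l.
rewrite phiD phiN h subrr mulr0 mul0r !mxE => /esym /eqP.
by rewrite scaler_eq0 (negPf (E_neq0 _ _)) orbF subr_eq0 => /eqP.
Qed.

Lemma phiM M (C D : 'M[K]_M) : phi C * phi D = phi (C *m D).
Proof.
rewrite /phi mulr_suml; apply: eq_bigr => r _.
rewrite mulr_suml.
transitivity (\sum_(l < M) \sum_(l' < M) (C r l * D l l') *: E r l').
  apply: eq_bigr => l _; rewrite mulr_sumr (bigD1 l) //= [X in _ + X]big1 ?addr0.
    rewrite mulr_sumr; apply: eq_bigr => l' _.
    by rewrite -scalerAr -scalerAl E_mul eqxx scalerA mulrC.
  move=> r' /ord_neq hr; rewrite mulr_sumr; apply: big1 => l' _.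
  by rewrite -scalerAr -scalerAl E_mul eq_sym hr !scaler0.
by rewrite exchange_big; apply: eq_bigr => l' _; rewrite mxE scaler_suml.
Qed.

Lemma phi1 M : phi (1%:M : 'M[K]_M) = eM M.
Proof.
rewrite eM_sum /phi; apply: eq_bigr => r _.
rewrite (bigD1 r) //= [X in _ + X]big1 ?addr0; first by rewrite mxE eqxx scale1r.
by move=> l hl; rewrite mxE eq_sym (negPf hl) scale0r.
Qed.
End Corner.

End P4.
Import P4.

Module P5.

Section Main.
Variables (K : fieldType) (A : algType K) (x y : A).
Hypothesis yx : y * x = 1.
Hypothesis pn0 : pp x y != 0.
Local Notation pp := (pp x y).
Local Notation E := (E x y).
Local Notation mon := (mon x y).
Local Notation ev := (ev x y).
Local Notation eM := (eM x y).
Local Notation phi := (phi x y).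
Local Notation hx := (horner_alg x).

Lemma hx_expand (R : {poly K}) : hx R = \sum_(i < size R) R`_i *: x ^+ i.
Proof.
rewrite -{1}[R]coefK poly_def raddf_sum; apply: eq_bigr => i _.
rewrite /= linearZ /= rmorphXn mulr_algl; congr (_ *: (_ ^+ _)); exact: horner_algX.
Qed.

Lemma transc (R : {poly K}) : hx R = 0 -> R = 0.
Proof.
move=> h; apply/polyP => m; rewrite coef0.
have : pp * y ^+ m * hx R * pp = 0 by rewrite h mulr0 mul0r.
rewrite hx_expand mulr_sumr mulr_suml.
under eq_bigr do rewrite -scalerAr -scalerAl -(mulrA pp) ppyx //.
case: (ltnP m (size R)) => hm; last by rewrite nth_default.
rewrite (bigD1 (Ordinal hm)) //= eqxx big1 ?addr0.
  by move/eqP; rewrite scaler_eq0 (negPf pn0) orbF => /eqP.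
by move=> i /ord_neq; rewrite eq_sym => ->; rewrite scaler0.
Qed.

Lemma bnd_mono N N' (s : seq (K * nat * nat)) : bnd N s -> (N <= N')%N -> bnd N' s.
Proof.
move=> h hN; apply/allP => t ts; have /andP [h1 h2] := allP h t ts.
by rewrite (leq_trans h1 hN) (leq_trans h2 hN).
Qed.

Lemma bnd_exists (s : seq (K * nat * nat)) : exists N, (0 < N)%N /\ bnd N s.
Proof.
elim: s => [|t s [N [hN hs]]]; first by exists 1%N.
exists (maxn N (maxn t.1.2.+1 t.2.+1)); split; first by rewrite leq_max hN.
rewrite /bnd /= !leq_max !ltnSn !orbT /=.
by apply: (bnd_mono hs); rewrite leq_max leqnn.
Qed.

Lemma eMM m n : eM m * eM n = eM (minn m n).
Proof.
rewrite !eME mulrBr mulr1 !mulrBl mul1r.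
have -> : x ^+ m * y ^+ m * (x ^+ n * y ^+ n) = x ^+ m * (y ^+ m * x ^+ n) * y ^+ n
  by rewrite !mulrA.
rewrite (yXn yx); case: leqP => h.
  by rewrite -exprD subnKC // subrr subr0.
by rewrite -mulrA -exprD subnK ?(ltnW h) // opprB addrA subrK.
Qed.

Lemma eM_xpp n l : eM n * (x ^+ l * pp) = if (l < n)%N then x ^+ l * pp else 0.
Proof.
rewrite eME mulrBl mul1r.
have -> : x ^+ n * y ^+ n * (x ^+ l * pp) = x ^+ n * (y ^+ n * x ^+ l) * pp by rewrite !mulrA.
rewrite (yXn yx); case: leqP => h.
  by rewrite -exprD subnKC // subrr.
by rewrite -(subnSK h) -(mulrA (x ^+ n)) (yXpp yx) mulr0 subr0.
Qed.

Lemma y_mon_pp M i j l : (i + l < M)%N -> y ^+ M * (mon i j * x ^+ l * pp) = 0.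
Proof.
move=> h; rewrite monxpp //; case: leqP => hj; last by rewrite mulr0.
have hlt : (i + (l - j) < M)%N by apply: leq_ltn_trans h; rewrite leq_add2l leq_subr.
by rewrite mulrA (yXn yx) leqNgt hlt /= -(subnSK hlt) (yXpp yx).
Qed.

Lemma killer N s N' M : bnd N s -> ev s * x ^+ N' = 0 -> (N + N' <= M)%N -> y ^+ M * ev s = 0.
Proof.
move=> hb h hM.
have -> : ev s = ev s * eM N' by rewrite eME mulrBr mulr1 mulrA h mul0r subr0.
rewrite eM_sum // !mulr_sumr big1 // => l _.
have -> : y ^+ M * (ev s * E l l) = (y ^+ M * (ev s * x ^+ l * pp)) * y ^+ l
  by rewrite /P2.E !mulrA.
rewrite /P2.ev !mulr_suml mulr_sumr big1_seq ?mul0r // => t /andP [_ ht].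
rewrite -scalerAl -scalerAl -scalerAr y_mon_pp ?scaler0 //.
have /andP [h1 h2] := allP hb t ht.
by rewrite (leq_trans _ hM) // -addSn leq_add // ltnW.
Qed.

Definition Ppoly (s : seq (K * nat * nat)) N : {poly K} :=
  \sum_(t <- s) t.1.1 *: 'X^(t.1.2 + (N - t.2)).

Lemma rX N s : bnd N s -> ev s * x ^+ N = hx (Ppoly s N).
Proof.
elim: s => [|t s IH]; first by rewrite ev_nil mul0r /Ppoly big_nil rmorph0.
rewrite /bnd /= => /andP [/andP [h1 h2] hs].
rewrite ev_cons mulrDl IH // /Ppoly big_cons rmorphD /=; congr (_ + _).
rewrite linearZ /= rmorphXn mulr_algl -scalerAl /P2.mon -mulrA (yXn yx) (ltnW h2) -exprD.
by congr (_ *: (_ ^+ _)); symmetry; exact: horner_algX.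
Qed.

Ltac nlia := repeat match goal with H : is_true (_ <= _)%N |- _ => move/leP: H => H end;
  try apply/leP; unfold subn, addn in *; lia.

Lemma shift_contra (a b : A) sa sb N (mu : K) k :
  bnd N sa -> bnd N sb -> a = ev sa -> b = ev sb -> a * b = 1 -> b * a = 1 ->
  mu != 0 -> (0 < k)%N -> (k <= N)%N ->
  a * x ^+ N = mu *: x ^+ (N + k) -> b * x ^+ N = mu^-1 *: x ^+ (N - k) -> False.
Proof.
move=> ha hb ea eb hab hba hmu hk hkN haN hbN.
pose N1 := (N + k.+1)%N.
have hN1 : (N <= N1)%N by rewrite leq_addr.
have e_ev : a - mu *: x ^+ k = ev (sa ++ [:: (- mu, k, 0%N)]).
  by rewrite ev_cat ev_cons ev_nil addr0 -ea /P2.mon expr0 mulr1 scaleNr.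
have e_bnd : bnd N1 (sa ++ [:: (- mu, k, 0%N)]).
  rewrite /bnd all_cat; apply/andP; split; first exact: (bnd_mono ha hN1).
  by rewrite /= andbT /N1 addnS !ltnS leq_addl.
have e_x : ev (sa ++ [:: (- mu, k, 0%N)]) * x ^+ N = 0.
  by rewrite -e_ev mulrBl haN -scalerAl -exprD addnC subrr.
have f_ev : b - mu^-1 *: y ^+ k = ev (sb ++ [:: (- mu^-1, 0%N, k)]).
  by rewrite ev_cat ev_cons ev_nil addr0 -eb /P2.mon expr0 mul1r scaleNr.
have f_bnd : bnd N1 (sb ++ [:: (- mu^-1, 0%N, k)]).
  rewrite /bnd all_cat; apply/andP; split; first exact: (bnd_mono hb hN1).
  by rewrite /= andbT /N1 addnS !ltnS leq_addl.
have f_x : ev (sb ++ [:: (- mu^-1, 0%N, k)]) * x ^+ N = 0.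
  by rewrite -f_ev mulrBl hbN -scalerAl (yXn yx) hkN subrr.
pose M := (N1 + N)%N.
have hMk : (k < M)%N by rewrite /M /N1; nlia.
have hMN : (N <= M)%N by rewrite /M leq_addl.
have ya : y ^+ M * a = mu *: y ^+ (M - k).
  have := killer e_bnd e_x (leqnn M); rewrite -e_ev mulrBr => /eqP.
  by rewrite subr_eq0 => /eqP ->; rewrite -scalerAr (yXn yx) leqNgt hMk.
have yb : y ^+ M * b = mu^-1 *: y ^+ (M + k).
  have := killer f_bnd f_x (leqnn M); rewrite -f_ev mulrBr => /eqP.
  by rewrite subr_eq0 => /eqP ->; rewrite -scalerAr -exprD.
have xM : x ^+ M = x ^+ N * x ^+ (M - N) by rewrite -exprD subnKC.
have aM : a * x ^+ M = mu *: x ^+ (M + k).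
  rewrite xM mulrA haN -scalerAl -exprD; congr (_ *: _ ^+ _); nlia.
have bM : b * x ^+ M = mu^-1 *: x ^+ (M - k).
  rewrite xM mulrA hbN -scalerAl -exprD; congr (_ *: _ ^+ _); nlia.
have h1 : b * eM M * a = eM (M - k).
  rewrite !eME mulrBr mulr1 mulrBl hba.
  have -> : b * (x ^+ M * y ^+ M) * a = (b * x ^+ M) * (y ^+ M * a) by rewrite !mulrA.
  by rewrite bM ya -scalerAl -scalerAr scalerA mulVf // scale1r.
have h2 : a * eM M * b = eM (M + k).
  rewrite !eME mulrBr mulr1 mulrBl hab.
  have -> : a * (x ^+ M * y ^+ M) * b = (a * x ^+ M) * (y ^+ M * b) by rewrite !mulrA.
  by rewrite aM yb -scalerAl -scalerAr scalerA mulfV // scale1r.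
have eMid : eM M * eM M = eM M by rewrite eMM minnn.
have hba' : (eM M * b * eM M) * (eM M * a * eM M) = eM (M - k).
  have -> : (eM M * b * eM M) * (eM M * a * eM M) = eM M * (b * (eM M * eM M) * a) * eM M
    by rewrite !mulrA.
  rewrite eMid h1 eMM (minn_idPr (leq_subr _ _)) eMM.
  by rewrite (minn_idPl (leq_subr _ _)).
have hab' : (eM M * a * eM M) * (eM M * b * eM M) = eM M.
  have -> : (eM M * a * eM M) * (eM M * b * eM M) = eM M * (a * (eM M * eM M) * b) * eM M
    by rewrite !mulrA.
  by rewrite eMid h2 eMM (minn_idPl (leq_addr _ _)) eMid.
move: hba' hab'; rewrite ea eb !(cornerE yx) !(phiM yx) -(phi1 x y M).
set Ca := (\matrix_(_, _) _); set Cb := (\matrix_(_, _) _).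
move=> hba' hab'; have hC := phi_inj yx pn0 hab'; have hC' := mulmx1C hC.
move: hba'; rewrite hC' (phi1 x y).
move=> hXX.
have : eM (M - k) * (x ^+ M.-1 * pp) = eM M * (x ^+ M.-1 * pp) by rewrite hXX.
rewrite !eM_xpp ifN; last by rewrite -leqNgt; nlia.
rewrite ifT; last by nlia.
move=> /esym hz; move: pn0; rewrite -[pp](mul1r) -(yXnn yx M.-1) -mulrA hz mulr0.
by rewrite eqxx.
Qed.

Lemma horner_mx_expand n (C : 'M[K]_n.+1) (q : {poly K}) :
  horner_mx C q = \sum_(i < size q) q`_i *: C ^+ i.
Proof.
rewrite -{1}[q]coefK poly_def rmorph_sum /=; apply: eq_bigr => i _.
by rewrite -mul_polyC rmorphM /= horner_mx_C rmorphXn /= horner_mx_X -mul_scalar_mx mulmxE.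
Qed.

Lemma good (a : A) sa N (lam : K) : (0 < N)%N -> bnd N sa -> a = ev sa ->
  a * x ^+ N = lam *: x ^+ N ->
  exists D (d : 'I_D -> K), (a - lam%:A) ^+ D.+1 = \sum_(i < D) d i *: (a - lam%:A) ^+ i.+1.
Proof.
move=> hN ha ea haN.
set e := a - lam%:A.
set se := sa ++ [:: (- lam, 0%N, 0%N)].
have e_ev : e = ev se.
  by rewrite /se ev_cat ev_cons ev_nil addr0 -ea /P2.mon !expr0 mulr1 scaleNr.
have e_bnd : bnd N se.
  by rewrite /bnd all_cat; apply/andP; split; [exact: ha | rewrite /= hN].
have e_x : e * x ^+ N = 0 by rewrite mulrBl haN mulr_algl subrr.
pose M' := (N + N).-1.
have hM : M'.+1 = (N + N)%N by rewrite /M' prednK // addn_gt0 hN.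
have ye : y ^+ M'.+1 * e = 0.
  rewrite e_ev; apply: (@killer N se N M'.+1 e_bnd); [by rewrite -e_ev | by rewrite hM].
have e_r : e * eM M'.+1 = e.
  have eN : e * eM N = e by rewrite eME mulrBr mulr1 mulrA e_x mul0r subr0.
  by rewrite -{1}eN -mulrA eMM (minn_idPl _) // hM leq_addr.
have e_l : eM M'.+1 * e = e by rewrite eME mulrBl mul1r -mulrA ye mulr0 subr0.
pose C := \matrix_(r < M'.+1, l < M'.+1) cco se r l.
have eC : e = phi C by rewrite -(cornerE yx) -e_ev e_l e_r.
have ePow : forall n, e ^+ n.+1 = phi (C ^+ n.+1).
  elim=> [|n IH]; first by rewrite !expr1.
  by rewrite exprSr IH [in X in _ * X]eC (phiM yx) mulmxE -exprSr.
have phi_sum : forall (F : 'I_M'.+1 -> 'M[K]_M'.+1), phi (\sum_i F i) = \sum_i phi (F i).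
  by move=> F; apply: big_morph; [exact: phiD | exact: phi0].
have CH := Cayley_Hamilton C.
rewrite horner_mx_expand size_char_poly big_ord_recr /= in CH.
have lc : (char_poly C)`_M'.+1 = 1.
  by have := char_poly_monic C; rewrite monicE /lead_coef size_char_poly => /eqP.
rewrite lc scale1r in CH.
have CM : C ^+ M'.+2 = \sum_(i < M'.+1) (- (char_poly C)`_i) *: C ^+ i.+1.
  have -> : C ^+ M'.+2 = C ^+ M'.+1 * C by rewrite exprSr.
  move/eqP: CH; rewrite addrC addr_eq0 => /eqP ->.
  rewrite mulNr mulr_suml -sumrN; apply: eq_bigr => i _.
  by rewrite -scalerAl -exprSr scaleNr.
exists M'.+1, (fun i => - (char_poly C)`_i).
rewrite ePow CM phi_sum; apply: eq_bigr => i _.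
by rewrite phiZ ePow.
Qed.

Lemma unit_alg (a b : A) : (forall z, spanned x y z) -> a * b = 1 -> b * a = 1 ->
  exists lam D (d : 'I_D -> K), (a - lam%:A) ^+ D.+1 = \sum_(i < D) d i *: (a - lam%:A) ^+ i.+1.
Proof.
move=> span hab hba.
have [sa ea] := span a; have [sb eb] := span b.
have [Na [hNa ha]] := bnd_exists sa; have [Nb [hNb hb]] := bnd_exists sb.
pose N := maxn Na Nb.
have hN : (0 < N)%N by rewrite leq_max hNa.
have ha' : bnd N sa by apply: (bnd_mono ha); rewrite leq_max leqnn.
have hb' : bnd N sb by apply: (bnd_mono hb); rewrite leq_max leqnn orbT.
subst a b.
have hxM p q : hx (p * q) = hx p * hx q by exact: rmorphM.
have hxB p q : hx (p - q) = hx p - hx q by exact: rmorphB.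
have hxX : hx 'X = x := horner_algX x.
have hxXn n : hx ('X^n) = x ^+ n by rewrite -{2}hxX; exact: rmorphXn.
have hxZ c p : hx (c *: p) = c *: hx p by rewrite linearZ /= mulr_algl.
have QP : Ppoly sb N * Ppoly sa N = 'X^(N + N).
  apply: subr0_eq; apply: transc.
  rewrite hxB hxM hxXn -(rX ha') -(rX hb').
  rewrite -mulrA.
  have -> : x ^+ N * (ev sa * x ^+ N) = ev sa * x ^+ N * x ^+ N.
    by rewrite (rX ha') -hxXn -!hxM mulrC.
  by rewrite !mulrA hba mul1r -exprD subrr.
have : Ppoly sa N %| ('X - 0%:P) ^+ (N + N) by rewrite polyC0 subr0 -QP dvdp_mulIr.
case/dvdp_exp_XsubCP => k hk; rewrite polyC0 subr0 => /eqpP [[c1 c2] /andP [hc1 hc2] /= hP].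
pose lam := c1^-1 * c2.
have hlam : lam != 0 by rewrite mulf_neq0 // invr_neq0.
have eP : Ppoly sa N = lam *: 'X^k.
  by rewrite /lam -scalerA -hP scalerA mulVf // scale1r.
have aN : ev sa * x ^+ N = lam *: x ^+ k by rewrite (rX ha') eP hxZ hxXn.
have eQ : Ppoly sb N = lam^-1 *: 'X^(N + N - k).
  apply: (@mulIf _ ('X^k)); first by rewrite expf_neq0 // polyX_eq0.
  by rewrite -scalerAl -exprD subnK // -QP eP -scalerAr scalerA mulVf // scale1r.
have bN : ev sb * x ^+ N = lam^-1 *: x ^+ (N + N - k) by rewrite (rX hb') eQ hxZ hxXn.
case: (ltngtP k N) => hkN.
- exfalso; apply: (@shift_contra (ev sb) (ev sa) sb sa N lam^-1 (N - k));
    rewrite ?invr_neq0 ?subn_gt0 ?leq_subr ?invrK ?aN ?bN //; congr (_ *: _ ^+ _); nlia.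
- exfalso; apply: (@shift_contra (ev sa) (ev sb) sa sb N lam (k - N));
    rewrite ?subn_gt0 ?leq_subLR ?aN ?bN //; congr (_ *: _ ^+ _); nlia.
- exists lam; apply: (@good (ev sa) sa N lam hN ha' erefl).
  by rewrite aN hkN.
Qed.
End Main.

End P5.
Import P5.

Module P6.

Section Span.
Variables (K : fieldType) (V : lmodType K).

Definition inspan n (v : 'I_n -> V) w := exists c : 'I_n -> K, w = \sum_(i < n) c i *: v i.

Lemma inspan0 n (v : 'I_n -> V) : inspan v 0.
Proof. by exists (fun _ => 0); rewrite big1 // => i _; rewrite scale0r. Qed.
Lemma inspanD n (v : 'I_n -> V) u w : inspan v u -> inspan v w -> inspan v (u + w).
Proof.
move=> [c ->] [e ->]; exists (fun i => c i + e i); rewrite -big_split.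
by apply: eq_bigr => i _; rewrite scalerDl.
Qed.
Lemma inspanZ n (v : 'I_n -> V) a w : inspan v w -> inspan v (a *: w).
Proof.
move=> [c ->]; exists (fun i => a * c i); rewrite scaler_sumr.
by apply: eq_bigr => i _; rewrite scalerA.
Qed.
Lemma inspan_sum n (v : 'I_n -> V) (I : Type) (r : seq I) (F : I -> V) :
  (forall i, inspan v (F i)) -> inspan v (\sum_(i <- r) F i).
Proof. by move=> H; apply: big_ind => //; [apply: inspan0 | apply: inspanD]. Qed.
Lemma inspan_v n (v : 'I_n -> V) i : inspan v (v i).
Proof.
exists (fun j => if j == i then 1 else 0); rewrite (bigD1 i) //= eqxx scale1r big1 ?addr0 //.
by move=> j /negbTE ->; rewrite scale0r.
Qed.
Lemma inspan_trans n m (v : 'I_n -> V) (u : 'I_m -> V) w :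
  (forall i, inspan v (u i)) -> inspan u w -> inspan v w.
Proof. by move=> H [c ->]; apply: inspan_sum => i; apply: inspanZ. Qed.

Lemma span_dim (P : V -> Prop) n (v : 'I_n -> V) :
  (forall i, P (v i)) -> (forall w, P w -> inspan v w) -> exists d, has_dim P d.
Proof.
elim: n v => [|n IH] v hv hs.
  exists 0%N, v; split => //; last by move=> c _ [].
case: (classic (forall c : 'I_n.+1 -> K, \sum_(i < n.+1) c i *: v i = 0 -> forall i, c i = 0)) => hind.
  exists n.+1, v; split=> // w /hs [c ->]; by exists c.
have [c [hc0 hc]] : exists c : 'I_n.+1 -> K, \sum_(i < n.+1) c i *: v i = 0 /\ ~ (forall i, c i = 0).
  apply: NNPP => H; apply: hind => c h; apply: NNPP => H2; apply: H; exists c; split=> //.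
have [i0 hi0] : exists i0, c i0 != 0.
  apply: NNPP => H; apply: hc => i; apply: NNPP => H2; apply: H; exists i; exact/eqP.
apply: (IH (fun j => v (lift i0 j))) => [j|w /hs [e ->]]; first exact: hv.
have hvi0 : v i0 = - (c i0)^-1 *: \sum_(j < n) c (lift i0 j) *: v (lift i0 j).
  move: hc0; rewrite (bigD1_ord i0) //= => /eqP; rewrite addr_eq0 => /eqP h.
  by rewrite scaleNr -scalerN -h scalerA mulVf // scale1r.
rewrite (bigD1_ord i0) //= hvi0 scalerA scaler_sumr -big_split /=.
exists (fun j => e i0 * - (c i0)^-1 * c (lift i0 j) + e (lift i0 j)).
by apply: eq_bigr => j _; rewrite scalerA scalerDl.
Qed.
End Span.

Section PowSpan.
Variables (K : fieldType) (A : algType K) (t : A) (D : nat) (d : 'I_D -> K).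
Hypothesis rel : t ^+ D.+1 = \sum_(i < D) d i *: t ^+ i.+1.
Local Notation Sp := (inspan (fun i : 'I_D.+1 => t ^+ i)).

Lemma Sp_pow k : (k <= D)%N -> Sp (t ^+ k).
Proof. by move=> h; apply: (inspan_v (fun i : 'I_D.+1 => t ^+ i) (Ordinal (h : k < D.+1)%N)). Qed.
Lemma Sp_powS k : (k <= D)%N -> Sp (t ^+ k.+1).
Proof.
rewrite leq_eqVlt => /orP [/eqP ->|h]; last exact: Sp_pow.
rewrite rel; apply: inspan_sum => i; apply: inspanZ; exact: Sp_pow.
Qed.
Lemma Sp_t w : Sp w -> Sp (t * w).
Proof.
move=> [c ->]; rewrite mulr_sumr; apply: inspan_sum => i.
by rewrite -scalerAr -exprS; apply: inspanZ; apply: Sp_powS; rewrite -ltnS.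
Qed.
Lemma Sp_tk k w : Sp w -> Sp (t ^+ k * w).
Proof. by elim: k => [|k IH] h; rewrite ?expr0 ?mul1r // exprS -mulrA; apply: Sp_t; apply: IH. Qed.
Lemma Sp_mul u w : Sp u -> Sp w -> Sp (u * w).
Proof.
move=> [c ->] hw; rewrite mulr_suml; apply: inspan_sum => i.
by rewrite -scalerAl; apply: inspanZ; apply: Sp_tk.
Qed.
Lemma Sp_1 : Sp 1.
Proof. by have := Sp_pow (leq0n D); rewrite expr0. Qed.
Lemma Sp_powshift (lam : K) n : Sp ((t + lam%:A) ^+ n).
Proof.
elim: n => [|n IH]; first by rewrite expr0; exact: Sp_1.
rewrite exprS mulrDl mulr_algl; apply: inspanD; [exact: Sp_t | exact: inspanZ].
Qed.
End PowSpan.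

End P6.
Import P6.

Module P7.

Section Final.
Variables (K : fieldType) (A : algType K) (x y : A).
Hypothesis hS : S1_presentation x y.
Let yx : y * x = 1 := proj1 hS.
Let pn0 : pp x y != 0 := pp_neq0 hS.
Let span : forall z, spanned x y z := all_spanned hS.

Lemma inj_case (f : A -> A) : alg_morph f -> f (pp x y) != 0 -> injective f.
Proof.
move=> fm hfp z1 z2 h.
have hz : f (z1 - z2) = 0 by rewrite (amB fm) h subrr.
have [s es] := span (z1 - z2).
have [N [_ hN]] := bnd_exists s.
have hc : forall i j, cco s i j = 0.
  move=> i j; have := corner yx s i j; rewrite -es => /(congr1 f).
  rewrite !(amM fm) hz mulr0 !mul0r (amZ fm) => /esym /eqP.
  by rewrite scaler_eq0 (negPf hfp) orbF => /eqP.
have hc' : forall i j, cco' s i j = 0.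
  move=> [|i] [|j]; rewrite /cco'; try exact: hc i j; by rewrite big1.
have : z1 - z2 = 0.
  rewrite es (decomp x y hN); apply: big1 => i _; apply: big1 => j _.
  by rewrite hc hc' subrr scale0r.
by move/eqP; rewrite subr_eq0 => /eqP.
Qed.

Lemma fin_case (f : A -> A) : alg_morph f -> f (pp x y) = 0 ->
  (forall a b, f a * f b = f b * f a) /\ exists d, has_dim (image_of f) d.
Proof.
move=> fm hfp.
set a := f x; set b := f y.
have hba : b * a = 1 by rewrite /a /b -(amM fm) yx (am1 fm).
have hab : a * b = 1.
  have e : x * y = 1 - pp x y by rewrite ppE opprB addrC subrK.
  by rewrite /a /b -(amM fm) e (amB fm) (am1 fm) hfp subr0.
have fimg : forall z, exists s : seq (K * nat * nat),
    f z = \sum_(t <- s) t.1.1 *: (a ^+ t.1.2 * b ^+ t.2).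
  move=> z; have [s ->] := span z; exists s; rewrite /P2.ev (am_sum fm).
  by apply: eq_bigr => t _; rewrite (amZ fm) (amM fm) !(amX fm).
have cab : GRing.comm a b by rewrite /GRing.comm hab hba.
have commgen : forall u, GRing.comm u a -> GRing.comm u b -> forall s : seq (K * nat * nat),
    GRing.comm u (\sum_(t <- s) t.1.1 *: (a ^+ t.1.2 * b ^+ t.2)).
  move=> u hua hub s; apply: commr_sum => t _.
  rewrite /GRing.comm -scalerAl -scalerAr; congr (_ *: _).
  by apply: commrM; apply: commrX.
split.
  move=> z1 z2; have [s1 ->] := fimg z1; have [s2 ->] := fimg z2.
  apply: (commgen); apply: commr_sym; apply: (commgen) => //.
have [lam1 [D1 [d1 rel1]]] := unit_alg yx pn0 span hab hba.
have [lam2 [D2 [d2 rel2]]] := unit_alg yx pn0 span hba hab.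
set ta := a - lam1%:A; set tb := b - lam2%:A.
pose v := fun i : 'I_(D1.+1 + D2.+1) => if (i < D1.+1)%N then ta ^+ i else tb ^+ (i - D1.+1).
have fscal : forall lam : K, f lam%:A = lam%:A by move=> lam; rewrite (amZ fm) (am1 fm).
apply: (span_dim (v := v)).
  move=> i; rewrite /v; case: ifP => _.
    by exists ((x - lam1%:A) ^+ i); rewrite (amX fm) (amB fm) fscal.
  by exists ((y - lam2%:A) ^+ (i - D1.+1)); rewrite (amX fm) (amB fm) fscal.
have va : forall i : 'I_D1.+1, inspan v (ta ^+ i).
  move=> i; have hi : (i < D1.+1 + D2.+1)%N by rewrite (leq_trans (ltn_ord i)) // leq_addr.
  by have := inspan_v v (Ordinal hi); rewrite /v /= ltn_ord.
have vb : forall i : 'I_D2.+1, inspan v (tb ^+ i).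
  move=> i; have hi : (D1.+1 + i < D1.+1 + D2.+1)%N by rewrite ltn_add2l.
  by have := inspan_v v (Ordinal hi); rewrite /v /= ltnNge leq_addr /= addKn.
have pa : forall n, inspan v (a ^+ n).
  move=> n; apply: (inspan_trans va).
  by have := Sp_powshift rel1 lam1 n; rewrite /ta subrK.
have pb : forall n, inspan v (b ^+ n).
  move=> n; apply: (inspan_trans vb).
  by have := Sp_powshift rel2 lam2 n; rewrite /tb subrK.
move=> w [z <-]; have [s ->] := fimg z; apply: inspan_sum => t; apply: inspanZ.
by rewrite (yXn hab); case: ifP.
Qed.

Lemma eMx n : eM x y n.+1 * x = x * eM x y n.
Proof.
rewrite !eME mulrBl mul1r mulrBr mulr1; congr (_ - _).
have -> : x ^+ n.+1 * y ^+ n.+1 * x = x ^+ n.+1 * y ^+ n * (y * x) by rewrite (exprSr y) !mulrA.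
by rewrite yx mulr1 exprS !mulrA.
Qed.

Lemma part2 d : (0 < d)%N -> exists f : A -> A, alg_morph f /\ has_dim (image_of f) d.
Proof.
case: d => [|M] // _.
pose N := x * eM x y M.
have NP : forall k, (k <= M)%N -> N ^+ k.+1 = x ^+ k.+1 * eM x y (M - k).
  elim=> [|k IH] hk; first by rewrite expr1 subn0.
  rewrite exprSr IH ?(ltnW hk) // /N -(subnSK hk) -mulrA (mulrA (eM x y _)) eMx.
  by rewrite -mulrA (eMM yx) (minn_idPl (leq_subr _ _)) mulrA -exprSr.
have NM : N ^+ M.+1 = 0 by rewrite NP // subnn eME !expr0 mulr1 subrr mulr0.
have Np : forall k, (k <= M)%N -> N ^+ k * pp x y = x ^+ k * pp x y.
  case=> [|k] hk; first by rewrite !expr0.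
  rewrite NP 1?ltnW // -mulrA -[pp x y]mul1r -(expr0 x) (eM_xpp yx).
  by rewrite subn_gt0 hk.
pose a := 1 + N.
pose b := \sum_(k < M.+1) (- N) ^+ k.
have hab : a * b = 1.
  have := subrX1 (- N) M.+1; rewrite exprNn NM mulr0 sub0r => h.
  by apply/esym; rewrite -[1]opprK h -mulNr opprB opprK.
have cab : GRing.comm a b.
  apply: commr_sum => k _; apply: commrX; apply: commrN.
  by rewrite /GRing.comm /a mulrDl mulrDr mul1r mulr1.
have hba : b * a = 1 by rewrite -cab.
have [[f [fm [fx fy]]] _] := (proj2 hS) A a b hba.
exists f; split=> //.
exists (fun k : 'I_M.+1 => N ^+ k).
have rel : N ^+ M.+1 = \sum_(i < M) (0 : K) *: N ^+ i.+1.
  by rewrite NM big1 // => i _; rewrite scale0r.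
have SpN : inspan (fun k : 'I_M.+1 => N ^+ k) N.
  by have := Sp_powS rel (leq0n M); rewrite expr1.
split.
- move=> i; exists ((x - 1) ^+ i); rewrite (amX fm) (amB fm) (am1 fm) fx.
  by rewrite /a [1 + N]addrC addrK.
- move=> w [z <-]; have [s ->] := span z; rewrite /P2.ev (am_sum fm).
  apply: inspan_sum => t; rewrite (amZ fm); apply: inspanZ.
  rewrite (amM fm) !(amX fm) fx fy; apply: (Sp_mul rel).
    have -> : a = N + 1%:A by rewrite /a addrC scale1r.
    exact: Sp_powshift rel 1 _.
  elim: t.2 => [|n IH]; first by rewrite expr0; exact: Sp_1.
  rewrite exprS; apply: (Sp_mul rel) => //.
  apply: inspan_sum => k; elim: (nat_of_ord k) => [|m IHm]; first by rewrite expr0; exact: Sp_1.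
  rewrite exprS; apply: (Sp_mul rel) => //.
  by rewrite -scaleN1r; apply: inspanZ.
- move=> c hc m.
  have key : forall k : 'I_M.+1, pp x y * y ^+ m * (c k *: N ^+ k) * pp x y =
      (if (m == k :> nat) then c k else 0) *: pp x y.
    move=> k; rewrite -scalerAr -scalerAl -mulrA Np; last by rewrite -ltnS.
    rewrite mulrA -(mulrA (pp x y)) (ppyx yx).
    by case: eqP => _; rewrite ?scaler0 ?scale0r.
  have : pp x y * y ^+ m * (\sum_(k < M.+1) c k *: N ^+ k) * pp x y = 0 by rewrite hc mulr0 mul0r.
  rewrite mulr_sumr mulr_suml (eq_bigr _ (fun k _ => key k)) -scaler_suml.
  rewrite (bigD1 m) //= eqxx big1 ?addr0.
    by move/eqP; rewrite scaler_eq0 (negPf pn0) orbF => /eqP.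
  by move=> k hk; rewrite eq_sym (ord_neq hk).
Qed.
End Final.


End P7.
Import P7.

Unset Implicit Arguments. Set Strict Implicit.

Theorem proposition4p7 (K : fieldType) (A : algType K) (x y : A) :
  [pchar K] =i pred0 ->
  S1_presentation x y ->
  (forall f : A -> A, alg_morph f ->
     injective f \/
     ((forall a b, f a * f b = f b * f a) /\ exists d : nat, has_dim (image_of f) d))
  /\
  (forall d : nat, (0 < d)%N ->
     exists f : A -> A, alg_morph f /\ has_dim (image_of f) d).
Proof.
move=> _ hS; split; last exact: (part2 hS).
move=> f fm; case: (eqVneq (f (pp x y)) 0) => hfp.
  by right; apply: (fin_case hS).
by left; apply: (inj_case hS).
Qed.
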